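(* In the setting of the context, fix $n\ge1$ and for each $k\ge n$ let $\hat{\mathbb{F}}^n_k$ be the distribution of $(X_{\delta_n},X_{2\delta_n}-X_{\delta_n},\dots,X_{2^n\delta_n}-X_{(2^n-1)\delta_n})$ under $\hat{\mathbb{E}}^k$, i.e. $\hat{\mathbb{F}}^n_k[\varphi]=\hat{\mathbb{E}}^k[\varphi(X_{\delta_n},\dots,X_{2^n\delta_n}-X_{(2^n-1)\delta_n})]$ for $\varphi\in C_{b.Lip}(\mathbb{R}^{2^n\times2d})$. Then $\{\hat{\mathbb{F}}^n_k:k\ge n\}$ is tight, i.e. there is a tight sublinear expectation $\hat{\mathbb{F}}$ on $(\mathbb{R}^{2^n\times2d},C_{b.Lip}(\mathbb{R}^{2^n\times2d}))$ such that $\hat{\mathbb{F}}^n_k[\varphi]-\hat{\mathbb{F}}^n_k[\phi]\le\hat{\mathbb{F}}[\varphi-\phi]$ for all $k\ge n$ and all $\varphi,\phi$.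
   Context: $C_{b.Lip}(\mathbb{R}^m)$: bounded Lipschitz functions. Sublinear expectation space $(\Omega,\mathcal{H},\hat{\mathbb{E}})$: $\mathcal{H}$ a linear space of real functions on $\Omega$ closed under composition with $C_{b.Lip}$ functions; $\hat{\mathbb{E}}$ monotone, constant preserving, subadditive, positively homogeneous. Setting: $(M_t)_{t\ge0}$, $(N_t)_{t\ge0}$ are $d$-dimensional processes with independent increments (with $M_0=N_0=0$, and for $t_1<\dots<t_m$ the last increment independent from the earlier values, where $Y$ is independent from $X$ under $\hat{\mathbb{E}}$ iff $\hat{\mathbb{E}}[\varphi(X,Y)]=\hat{\mathbb{E}}[\hat{\mathbb{E}}[\varphi(x,Y)]_{x=X}]$) on sublinear expectation spaces $(\Omega_i,\mathcal{H}_i,\hat{\mathbb{E}}_i)$, $i=1,2$, satisfying (A): there are sublinear $\tilde{\mathbb{E}}_i$ on $\mathcal{H}_i$ with $\hat{\mathbb{E}}_i[X]-\hat{\mathbb{E}}_i[Y]\le\tilde{\mathbb{E}}_i[X-Y]$ and $\lim_{s\to t}(\tilde{\mathbb{E}}_1[|M_s-M_t|]+\tilde{\mathbb{E}}_2[|N_s-N_t|])=0$ for every $t\ge0$. Put $\Omega=\Omega_1\times\Omega_2$, $\tilde M_t(\omega_1,\omega_2)=M_t(\omega_1)$, $\tilde N_t(\omega_1,\omega_2)=N_t(\omega_2)$, $X_t=(\tilde M_t,\tilde N_t)$ for $t\in[0,1]$, $\delta_m=2^{-m}$. For $m\ge1$, $\mathcal{H}^m=\{\varphi(X_{\delta_m},X_{2\delta_m}-X_{\delta_m},\dots,X_{2^m\delta_m}-X_{(2^m-1)\delta_m}):\varphi\in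 C_{b.Lip}(\mathbb{R}^{2^m\times2d})\}$ (note $\mathcal{H}^n\subset\mathcal{H}^k$ for $k\ge n$), and $\hat{\mathbb{E}}^m:\mathcal{H}^m\to\mathbb{R}$ is defined by: for a single increment, $\hat{\mathbb{E}}^m[\phi(X_{j\delta_m}-X_{(j-1)\delta_m})]=\hat{\mathbb{E}}_1[\psi(M_{j\delta_m}-M_{(j-1)\delta_m})]$ with $\psi(x)=\hat{\mathbb{E}}_2[\phi(x,N_{j\delta_m}-N_{(j-1)\delta_m})]$; in general $\hat{\mathbb{E}}^m[\varphi(X_{\delta_m},\dots,X_{2^m\delta_m}-X_{(2^m-1)\delta_m})]=\varphi_0$, where $\varphi_{2^m}=\varphi$ and $\varphi_{j-1}(x_1,\dots,x_{j-1})=\hat{\mathbb{E}}^m[\varphi_j(x_1,\dots,x_{j-1},X_{j\delta_m}-X_{(j-1)\delta_m})]$ (single-increment rule) for $j=2^m,\dots,1$. A sublinear expectation $\hat{\mathbb{F}}$ on $(\mathbb{R}^p,C_{b.Lip}(\mathbb{R}^p))$ is tight if for each $\varepsilon>0$ there exist $N>0$ and $\varphi\in C_{b.Lip}(\mathbb{R}^p)$ with $I_{\{|x|\ge N\}}\le\varphi$ and $\hat{\mathbb{F}}[\varphi]<\varepsilon$. *)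

(* Defs.v *)
From HB Require Import structures.
From mathcomp Require Import all_boot all_order all_algebra.
From mathcomp Require Import reals.
Set Implicit Arguments. Unset Strict Implicit. Unset Printing Implicit Defensive.
Import Order.TTheory GRing.Theory Num.Theory.
Local Open Scope ring_scope.

Section Defs.
Variable R : realType.

Definition vnorm (I : finType) (x : I -> R) : R := Num.sqrt (\sum_i x i ^+ 2).

Definition bLip (I : finType) (f : (I -> R) -> R) : Prop :=
  (exists C : R, forall x, `|f x| <= C) /\
  (exists L : R, forall x y, `|f x - f y| <= L * vnorm (fun i => x i - y i)).

Definition linear_space (Om : Type) (H : (Om -> R) -> Prop) : Prop :=
  [/\ H (fun _ => 0),
      (forall X Y, H X -> H Y -> H (fun w => X w + Y w)) &
      (forall (a : R) X, H X -> H (fun w => a * X w))].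

Definition bLip_closed (Om : Type) (H : (Om -> R) -> Prop) : Prop :=
  forall (I : finType) (X : I -> Om -> R) (phi : (I -> R) -> R),
    (forall i, H (X i)) -> bLip phi -> H (fun w => phi (fun i => X i w)).

Definition sublinear_expectation (Om : Type) (H : (Om -> R) -> Prop)
    (E : (Om -> R) -> R) : Prop :=
  [/\ (forall X Y, H X -> H Y -> (forall w, X w <= Y w) -> E X <= E Y),
      (forall c : R, E (fun _ => c) = c),
      (forall X Y, H X -> H Y -> E (fun w => X w + Y w) <= E X + E Y) &
      (forall (a : R) X, H X -> 0 <= a -> E (fun w => a * X w) = a * E X)].

Definition sublinear_space (Om : Type) (H : (Om -> R) -> Prop)
    (E : (Om -> R) -> R) : Prop :=
  [/\ linear_space H, bLip_closed H & sublinear_expectation H E].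

Definition in_H (Om : Type) (H : (Om -> R) -> Prop) (I : finType)
    (X : Om -> I -> R) : Prop := forall i, H (fun w => X w i).

Definition join (I J : finType) (x : I -> R) (y : J -> R) : (I + J)%type -> R :=
  fun s => match s with inl i => x i | inr j => y j end.

Definition indep (Om : Type) (E : (Om -> R) -> R) (I J : finType)
    (X : Om -> I -> R) (Y : Om -> J -> R) : Prop :=
  forall phi : ((I + J)%type -> R) -> R, bLip phi ->
    E (fun w => phi (join (X w) (Y w))) =
    E (fun w => (fun x => E (fun w' => phi (join x (Y w')))) (X w)).

(* d-dimensional process with independent increments:
   M_0 = 0, M_t in H for t >= 0, and for 0 <= t_0 < t_1 < ... < t_{k+1}
   the last increment M_{t_{k+1}} - M_{t_k} is independent from
   (M_{t_0}, ..., M_{t_k}). *)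
Definition indep_incr (Om : Type) (H : (Om -> R) -> Prop) (E : (Om -> R) -> R)
    (d : nat) (M : R -> Om -> 'I_d -> R) : Prop :=
  [/\ (forall w i, M 0 w i = 0),
      (forall t, 0 <= t -> in_H H (M t)) &
      (forall (k : nat) (t : 'I_k.+2 -> R),
          0 <= t ord0 -> (forall i j : 'I_k.+2, (i < j)%N -> t i < t j) ->
          indep E (fun w (p : ('I_k.+1 * 'I_d)%type) =>
                     M (t (widen_ord (leqnSn _) p.1)) w p.2)
                  (fun w i => M (t ord_max) w i - M (t (inord k)) w i))].

Definition condA (Om1 Om2 : Type) (H1 : (Om1 -> R) -> Prop) (H2 : (Om2 -> R) -> Prop)
    (E1 : (Om1 -> R) -> R) (E2 : (Om2 -> R) -> R) (d : nat)
    (M : R -> Om1 -> 'I_d -> R) (N : R -> Om2 -> 'I_d -> R) : Prop :=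
  exists (Et1 : (Om1 -> R) -> R) (Et2 : (Om2 -> R) -> R),
    [/\ sublinear_expectation H1 Et1 /\ sublinear_expectation H2 Et2,
        (forall X Y, H1 X -> H1 Y -> E1 X - E1 Y <= Et1 (fun w => X w - Y w)),
        (forall X Y, H2 X -> H2 Y -> E2 X - E2 Y <= Et2 (fun w => X w - Y w)) &
        (forall s t, 0 <= s -> 0 <= t ->
           H1 (fun w => vnorm (fun i => M s w i - M t w i)) /\
           H2 (fun w => vnorm (fun i => N s w i - N t w i))) /\
        (forall t, 0 <= t -> forall eps : R, 0 < eps -> exists delta : R,
           0 < delta /\ forall s, 0 <= s -> `|s - t| < delta ->
             Et1 (fun w => vnorm (fun i => M s w i - M t w i)) +
             Et2 (fun w => vnorm (fun i => N s w i - N t w i)) < eps)].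

(* R^{2d}, coordinates of X_t = (M~_t, N~_t) *)
Definition V (d : nat) := ('I_d + 'I_d)%type.

Definition dyad (m : nat) : R := ((2 : R) ^+ m)^-1.

Definition incrE (Om1 Om2 : Type) (E1 : (Om1 -> R) -> R) (E2 : (Om2 -> R) -> R)
    (d : nat) (M : R -> Om1 -> 'I_d -> R) (N : R -> Om2 -> 'I_d -> R)
    (a b : R) (g : (V d -> R) -> R) : R :=
  E1 (fun w1 => (fun x => E2 (fun w2 =>
        g (join x (fun i => N b w2 i - N a w2 i))))
      (fun i => M b w1 i - M a w1 i)).

(* phi_c (vector of increments y, only y_0..y_{c-1} matter), computed with
   r = 2^m - c remaining steps:
   phi_c(y) = single-increment expectation on [c delta, (c+1) delta] of
              z |-> phi_{c+1}(y with y_c := z). *)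
Fixpoint iterE (Om1 Om2 : Type) (E1 : (Om1 -> R) -> R) (E2 : (Om2 -> R) -> R)
    (d : nat) (M : R -> Om1 -> 'I_d -> R) (N : R -> Om2 -> 'I_d -> R)
    (delta : R) (f : (nat -> V d -> R) -> R) (r c : nat) (y : nat -> V d -> R) : R :=
  match r with
  | 0 => f y
  | r'.+1 => incrE E1 E2 M N (c%:R * delta) (c.+1%:R * delta)
               (fun z => iterE E1 E2 M N delta f r' c.+1
                            (fun l => if l == c then z else y l))
  end.

(* E^m applied to f(increments), increments indexed by nat (only 0..2^m-1 used) *)
Definition Ehat_nat (Om1 Om2 : Type) (E1 : (Om1 -> R) -> R) (E2 : (Om2 -> R) -> R)
    (d : nat) (M : R -> Om1 -> 'I_d -> R) (N : R -> Om2 -> 'I_d -> R)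
    (m : nat) (f : (nat -> V d -> R) -> R) : R :=
  iterE E1 E2 M N (dyad m) f (2 ^ m) 0 (fun _ _ => 0).

Definition Ehat (Om1 Om2 : Type) (E1 : (Om1 -> R) -> R) (E2 : (Om2 -> R) -> R)
    (d : nat) (M : R -> Om1 -> 'I_d -> R) (N : R -> Om2 -> 'I_d -> R)
    (m : nat) (phi : (('I_(2 ^ m) * V d)%type -> R) -> R) : R :=
  Ehat_nat E1 E2 M N m (fun y => phi (fun p => y (val p.1) p.2)).

(* F^n_k[phi] = E^k[phi(X_{delta_n}, ..., X_{2^n delta_n} - X_{(2^n-1) delta_n})],
   where the i-th level-n increment is written as the sum of the 2^(k-n)
   level-k increments it consists of (this is its representation in H^k). *)
Definition Fnk (Om1 Om2 : Type) (E1 : (Om1 -> R) -> R) (E2 : (Om2 -> R) -> R)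
    (d : nat) (M : R -> Om1 -> 'I_d -> R) (N : R -> Om2 -> 'I_d -> R)
    (n k : nat) (phi : (('I_(2 ^ n) * V d)%type -> R) -> R) : R :=
  Ehat_nat E1 E2 M N k (fun y => phi (fun p =>
     \sum_(l < 2 ^ (k - n)) y (val p.1 * 2 ^ (k - n) + l)%N p.2)).

Definition tight (I : finType) (F : ((I -> R) -> R) -> R) : Prop :=
  forall eps : R, 0 < eps -> exists (Nr : R) (phi : (I -> R) -> R),
    [/\ 0 < Nr, bLip phi,
        (forall x, (if Nr <= vnorm x then 1 else 0) <= phi x) & F phi < eps].

End Defs.

Arguments Fnk {R Om1 Om2} E1 E2 {d} M N n k phi.
Arguments Ehat {R Om1 Om2} E1 E2 {d} M N m phi.

(* Main.v *)
Require Import Defs.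
From HB Require Import structures.
From mathcomp Require Import all_boot all_order all_algebra.
From mathcomp Require Import reals.
From mathcomp Require Import ring lra zify.
From Stdlib Require Import FunctionalExtensionality.
Import Order.TTheory GRing.Theory Num.Theory.
Local Open Scope ring_scope.
Set Implicit Arguments. Unset Strict Implicit.

Section Basics.
Variable R : realType.

Lemma vnorm_ge0 (I : finType) (x : I -> R) : 0 <= vnorm x.
Proof. exact: sqrtr_ge0. Qed.

Lemma sumsq_ge0 (I : finType) (x : I -> R) : 0 <= \sum_i x i ^+ 2.
Proof. by apply: sumr_ge0 => i _; rewrite sqr_ge0. Qed.

Lemma vnorm_sq (I : finType) (x : I -> R) : vnorm x ^+ 2 = \sum_i x i ^+ 2.
Proof. by rewrite /vnorm sqr_sqrtr // sumsq_ge0. Qed.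

Lemma vnorm_coord (I : finType) (x : I -> R) i : `|x i| <= vnorm x.
Proof.
rewrite /vnorm -sqrtr_sqr; apply: ler_wsqrtr.
rewrite (bigD1 i) //= lerDl; apply: sumr_ge0 => l _; exact: sqr_ge0.
Qed.

Lemma vnorm_joinl (I J : finType) (x : I -> R) (u u' : J -> R) :
  vnorm (fun s => join x u s - join x u' s) = vnorm (fun i => u i - u' i).
Proof.
rewrite /vnorm big_sumType /=; congr Num.sqrt.
rewrite big1 ?add0r // => i _; by rewrite subrr expr0n.
Qed.

Lemma vnorm_joinr (I J : finType) (x x' : I -> R) (u : J -> R) :
  vnorm (fun s => join x u s - join x' u s) = vnorm (fun i => x i - x' i).
Proof.
rewrite /vnorm big_sumType /=; congr Num.sqrt.
rewrite [X in _ + X]big1 ?addr0 // => i _; by rewrite subrr expr0n.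
Qed.

Lemma bLipP (I : finType) (f : (I -> R) -> R) : bLip f ->
  exists C L, [/\ 0 <= C, 0 <= L, (forall x, `|f x| <= C) &
     (forall x y, `|f x - f y| <= L * vnorm (fun i => x i - y i))].
Proof.
move=> [[C HC] [L HL]]; exists C, `|L|; split => //.
- exact: le_trans (normr_ge0 _) (HC (fun _ => 0)).
- move=> x y; apply: le_trans (HL x y) _; apply: ler_wpM2r; first exact: vnorm_ge0.
  exact: ler_norm.
Qed.

Lemma bLip_intro (I : finType) (f : (I -> R) -> R) C L :
  (forall x, `|f x| <= C) ->
  (forall x y, `|f x - f y| <= L * vnorm (fun i => x i - y i)) -> bLip f.
Proof. by move=> h1 h2; split; [exists C | exists L]. Qed.

Lemma bLip_const (I : finType) (c : R) : bLip (fun _ : I -> R => c).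
Proof.
apply: (@bLip_intro _ _ `|c| 0) => // x y; by rewrite subrr normr0 mul0r.
Qed.

Lemma bLip_add (I : finType) (f g : (I -> R) -> R) : bLip f -> bLip g ->
  bLip (fun x => f x + g x).
Proof.
move=> /bLipP [C1 [L1 [_ _ h1 l1]]] /bLipP [C2 [L2 [_ _ h2 l2]]].
apply: (@bLip_intro _ _ (C1 + C2) (L1 + L2)).
- move=> x; apply: le_trans (ler_normD _ _) _; exact: lerD.
- move=> x y; rewrite mulrDl.
  have -> : f x + g x - (f y + g y) = (f x - f y) + (g x - g y) by ring.
  apply: le_trans (ler_normD _ _) _; exact: lerD.
Qed.

Lemma bLip_scale (I : finType) (a : R) (f : (I -> R) -> R) : bLip f ->
  bLip (fun x => a * f x).
Proof.
move=> /bLipP [C1 [L1 [_ hL h1 l1]]].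
apply: (@bLip_intro _ _ (`|a| * C1) (`|a| * L1)).
- move=> x; rewrite normrM; apply: ler_wpM2l => //.
- move=> x y; rewrite -mulrBr normrM -mulrA; apply: ler_wpM2l => //.
Qed.

Lemma bLip_sub (I : finType) (f g : (I -> R) -> R) : bLip f -> bLip g ->
  bLip (fun x => f x - g x).
Proof.
move=> hf hg; have := bLip_add hf (bLip_scale (-1) hg).
congr bLip; apply: functional_extensionality => x; ring.
Qed.

Lemma bLip_sum (I Q : finType) (s : seq Q) (F : Q -> (I -> R) -> R) :
  (forall q, bLip (F q)) -> bLip (fun x => \sum_(q <- s) F q x).
Proof.
move=> hF; elim: s => [|q s IH].
  have -> : (fun x : I -> R => \sum_(q <- [::]) F q x) = (fun _ => 0).
    by apply: functional_extensionality => x; rewrite big_nil.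
  exact: bLip_const.
have -> : (fun x => \sum_(q0 <- q :: s) F q0 x) = (fun x => F q x + \sum_(q0 <- s) F q0 x).
  by apply: functional_extensionality => x; rewrite big_cons.
exact: bLip_add.
Qed.

Section Space.
Variables (Om : Type) (H : (Om -> R) -> Prop) (E : (Om -> R) -> R).
Hypothesis HS : sublinear_space H E.

Lemma H_const c : H (fun _ => c).
Proof.
case: HS => [[H0 _ _] Hcl _].
have := @Hcl 'I_0 (fun _ _ => 0) (fun _ => c) (fun _ => H0) (bLip_const _ c).
by [].
Qed.

Lemma H_add X Y : H X -> H Y -> H (fun w => X w + Y w).
Proof. by case: HS => [[_ Ha _] _ _]; apply: Ha. Qed.

Lemma H_scale a X : H X -> H (fun w => a * X w).
Proof. by case: HS => [[_ _ Hs] _ _]; apply: Hs. Qed.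

Lemma H_sub X Y : H X -> H Y -> H (fun w => X w - Y w).
Proof.
move=> hX hY; have := H_add hX (H_scale (-1) hY).
congr H; apply: functional_extensionality => w; ring.
Qed.

Lemma H_comp (I : finType) (X : I -> Om -> R) (phi : (I -> R) -> R) :
  (forall i, H (X i)) -> bLip phi -> H (fun w => phi (fun i => X i w)).
Proof. by case: HS => [_ Hcl _]; apply: Hcl. Qed.

Lemma E_const c : E (fun _ => c) = c.
Proof. by case: HS => [_ _ [_ hc _ _]]. Qed.

Lemma E_mono X Y : H X -> H Y -> (forall w, X w <= Y w) -> E X <= E Y.
Proof. by case: HS => [_ _ [hm _ _ _]]; apply: hm. Qed.

Lemma E_subadd X Y : H X -> H Y -> E (fun w => X w + Y w) <= E X + E Y.
Proof. by case: HS => [_ _ [_ _ hs _]]; apply: hs. Qed.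

Lemma E_hom a X : H X -> 0 <= a -> E (fun w => a * X w) = a * E X.
Proof. by case: HS => [_ _ [_ _ _ hh]]; apply: hh. Qed.

Lemma E_le_add X Y D : H X -> H Y -> (forall w, X w <= Y w + D) -> E X <= E Y + D.
Proof.
move=> hX hY hle.
apply: le_trans (E_mono hX (H_add hY (H_const D)) hle) _.
by apply: le_trans (E_subadd hY (H_const D)) _; rewrite E_const.
Qed.

Lemma E_bound X C : H X -> (forall w, `|X w| <= C) -> `|E X| <= C.
Proof.
move=> hX hC; rewrite ler_norml; apply/andP; split.
  rewrite -[X in X <= _](E_const (- C)); apply: E_mono => // [|w]; first exact: H_const.
  by have := hC w; rewrite ler_norml => /andP[].
have h := @E_le_add X (fun _ => 0) C hX (H_const 0).
rewrite E_const add0r in h; apply: h => w; rewrite ?add0r.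
by have := hC w; rewrite ler_norml => /andP[].
Qed.

Lemma E_lip X Y D : H X -> H Y -> (forall w, `|X w - Y w| <= D) -> `|E X - E Y| <= D.
Proof.
move=> hX hY hD.
have h1 : E Y <= E X + D.
  apply: E_le_add => // w; have := hD w; rewrite ler_norml => /andP[h _]; lra.
have h2 : E X <= E Y + D.
  apply: E_le_add => // w; have := hD w; rewrite ler_norml => /andP[_ h]; lra.
rewrite ler_norml; apply/andP; split; lra.
Qed.

End Space.
End Basics.
Section Clip.
Variable R : realType.
Definition gcl (a u : R) := if `|u| / a <= 1 then `|u| / a else 1.

Lemma clip_lip (x y : R) :
  `|(if x <= 1 then x else 1) - (if y <= 1 then y else 1)| <= `|x - y|.
Proof.
have h1 : x - y <= `|x - y| := ler_norm _.
have h2 : y - x <= `|x - y| by rewrite distrC; exact: ler_norm.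
case: ifP => hx; case: ifP => hy; rewrite ?subrr ?normr0 ?normr_ge0 //;
  rewrite ler_norml; apply/andP; split;
  repeat match goal with H : (_ <= 1) = false |- _ => move/negbT: H; rewrite -ltNge => H end; lra.
Qed.

Variable a : R.
Hypothesis ha : 0 < a.

Lemma gcl_ge0 u : 0 <= gcl a u.
Proof. rewrite /gcl; case: ifP => // _; apply: divr_ge0 => //; exact: ltW. Qed.

Lemma gcl_le1 u : gcl a u <= 1.
Proof. by rewrite /gcl; case: ifP. Qed.

Lemma gcl_norm u : `|gcl a u| <= 1.
Proof. by rewrite ger0_norm ?gcl_ge0 ?gcl_le1. Qed.

Lemma gcl_le u : gcl a u <= `|u| / a.
Proof. rewrite /gcl; case: ifP => // /negbT; rewrite -ltNge => h; exact: ltW. Qed.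

Lemma gcl_lip u u' : `|gcl a u - gcl a u'| <= a^-1 * `|u - u'|.
Proof.
apply: le_trans (clip_lip _ _) _.
rewrite -mulrBl normrM mulrC ger0_norm ?invr_ge0 ?(ltW ha) //.
apply: ler_wpM2l; first by rewrite invr_ge0 ltW.
exact: ler_dist_dist.
Qed.

End Clip.
Section Iter.
Variable R : realType.
Variables (d : nat) (Om1 Om2 : Type) (H1 : (Om1 -> R) -> Prop) (E1 : (Om1 -> R) -> R)
  (H2 : (Om2 -> R) -> Prop) (E2 : (Om2 -> R) -> R)
  (M : R -> Om1 -> 'I_d -> R) (N : R -> Om2 -> 'I_d -> R).
Hypotheses (HS1 : sublinear_space H1 E1) (HS2 : sublinear_space H2 E2).
Hypotheses (hM : forall t, 0 <= t -> in_H H1 (M t)) (hN : forall t, 0 <= t -> in_H H2 (N t)).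

Section Incr.
Implicit Types (G : (V d -> R) -> R) (x : 'I_d -> R).
Variables (a b : R).
Hypotheses (ha : 0 <= a) (hb : 0 <= b).

Definition psi (G : (V d -> R) -> R) (x : 'I_d -> R) :=
  E2 (fun w2 => G (join x (fun i => N b w2 i - N a w2 i))).

Lemma incrE_psi G : incrE E1 E2 M N a b G = E1 (fun w1 => psi G (fun i => M b w1 i - M a w1 i)).
Proof. by []. Qed.

Lemma inner_mem G x : bLip G -> H2 (fun w2 => G (join x (fun i => N b w2 i - N a w2 i))).
Proof.
move=> /bLipP [C [L [_ _ hC hL]]].
apply: (@H_comp _ _ _ _ HS2 _ (fun i w2 => N b w2 i - N a w2 i) (fun u => G (join x u))).
  move=> i; apply: (H_sub HS2); [exact: (hN hb i) | exact: (hN ha i)].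
apply: (@bLip_intro _ _ _ C L) => // u u'.
by rewrite -(vnorm_joinl x); apply: hL.
Qed.

Lemma psi_bLip G : bLip G -> bLip (psi G).
Proof.
move=> hG; have := hG => /bLipP [C [L [_ _ hC hL]]].
apply: (@bLip_intro _ _ _ C L).
  move=> x; apply: (E_bound HS2); [exact: inner_mem | move=> w; exact: hC].
move=> x x'; apply: (E_lip HS2); try exact: inner_mem.
by move=> w; rewrite -(vnorm_joinr _ _ (fun i => N b w i - N a w i)); apply: hL.
Qed.

Lemma outer_mem G : bLip G -> H1 (fun w1 => psi G (fun i => M b w1 i - M a w1 i)).
Proof.
move=> hG.
apply: (@H_comp _ _ _ _ HS1 _ (fun i w1 => M b w1 i - M a w1 i) (psi G)).
  move=> i; apply: (H_sub HS1); [exact: (hM hb i) | exact: (hM ha i)].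
exact: psi_bLip.
Qed.

Lemma incr_mono G (G' : (V d -> R) -> R) : bLip G -> bLip G' -> (forall z, G z <= G' z) ->
  incrE E1 E2 M N a b G <= incrE E1 E2 M N a b G'.
Proof.
move=> hG hG' hle; rewrite !incrE_psi; apply: (E_mono HS1); try exact: outer_mem.
move=> w; apply: (E_mono HS2); try exact: inner_mem.
move=> w'; exact: hle.
Qed.

Lemma incr_lip G (G' : (V d -> R) -> R) D : bLip G -> bLip G' -> (forall z, `|G z - G' z| <= D) ->
  `|incrE E1 E2 M N a b G - incrE E1 E2 M N a b G'| <= D.
Proof.
move=> hG hG' hle; rewrite !incrE_psi; apply: (E_lip HS1); try exact: outer_mem.
move=> w; apply: (E_lip HS2); try exact: inner_mem.
move=> w'; exact: hle.
Qed.

Lemma incr_const c : incrE E1 E2 M N a b (fun _ => c) = c.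
Proof. by rewrite /incrE (E_const HS2) (E_const HS1). Qed.

Lemma incr_subadd G (G' : (V d -> R) -> R) : bLip G -> bLip G' ->
  incrE E1 E2 M N a b (fun z => G z + G' z) <=
  incrE E1 E2 M N a b G + incrE E1 E2 M N a b G'.
Proof.
move=> hG hG'; rewrite !incrE_psi.
apply: le_trans; last apply: (E_subadd HS1); try exact: outer_mem.
apply: (E_mono HS1).
- exact: (outer_mem (bLip_add hG hG')).
- apply: (H_add HS1); exact: outer_mem.
move=> w; apply: (E_subadd HS2); exact: inner_mem.
Qed.

Lemma incr_hom c G : 0 <= c -> bLip G ->
  incrE E1 E2 M N a b (fun z => c * G z) = c * incrE E1 E2 M N a b G.
Proof.
move=> hc hG; rewrite !incrE_psi.
have -> : (fun w1 => psi (fun z => c * G z) (fun i => M b w1 i - M a w1 i)) =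
          (fun w1 => c * psi G (fun i => M b w1 i - M a w1 i)).
  apply: functional_extensionality => w; rewrite /psi (E_hom HS2) //; exact: inner_mem.
rewrite (E_hom HS1) //; exact: outer_mem.
Qed.

End Incr.

Definition upd (y : nat -> V d -> R) (c : nat) (z : V d -> R) : nat -> V d -> R :=
  fun l => if l == c then z else y l.

Definition nice C L (f : (nat -> V d -> R) -> R) :=
  [/\ 0 <= L, (forall y, `|f y| <= C) &
      (forall y l z z', `|f (upd y l z) - f (upd y l z')| <= L * vnorm (fun i => z i - z' i))].

Definition nice' f := exists C L, nice C L f.

Variable delta : R.
Hypothesis hdelta : 0 <= delta.

Notation iter := (iterE E1 E2 M N delta).

Lemma iterS f r c y : iter f r.+1 c y =
  incrE E1 E2 M N (c%:R * delta) (c.+1%:R * delta) (fun z => iter f r c.+1 (upd y c z)).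
Proof. by []. Qed.

Lemma time_ge0 c : 0 <= c%:R * delta.
Proof. by apply: mulr_ge0. Qed.

Lemma nice_bLip C L g y c : nice C L g -> bLip (fun z => g (upd y c z)).
Proof. by move=> [_ hC hL]; apply: (@bLip_intro _ _ _ C L) => // z z'; apply: hL. Qed.

Lemma nice'_bLip g y c : nice' g -> bLip (fun z => g (upd y c z)).
Proof. by move=> [C [L h]]; exact: nice_bLip h. Qed.

Lemma upd_same y c z z' : upd (upd y c z) c z' = upd y c z'.
Proof. by apply: functional_extensionality => l; rewrite /upd; case: (l == c). Qed.

Lemma upd_comm y c l z z' : l != c -> upd (upd y l z) c z' = upd (upd y c z') l z.
Proof.
move=> hlc; apply: functional_extensionality => l'; rewrite /upd.
case: ifP => /eqP h1; case: ifP => /eqP h2 //.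
by move: hlc; rewrite -h1 -h2 eqxx.
Qed.

Lemma iter_nice C L f : nice C L f -> forall r c, nice C L (iter f r c).
Proof.
move=> hf r; elim: r => [|r IH] c; first exact: hf.
have [hL hC hLip] := IH c.+1.
split.
- done.
- move=> y; rewrite iterS.
  have := @incr_lip _ _ (time_ge0 c) (time_ge0 c.+1) (fun z => iter f r c.+1 (upd y c z))
     (fun _ => 0) C (nice_bLip _ _ (IH c.+1)) (bLip_const _ 0).
  rewrite incr_const subr0; apply => z; rewrite subr0; exact: hC.
- move=> y l z z'; rewrite !iterS.
  case: (eqVneq l c) => [<-|hlc].
    have -> : (fun z0 => iter f r l.+1 (upd (upd y l z) l z0)) =
              (fun z0 => iter f r l.+1 (upd (upd y l z') l z0)).
      by apply: functional_extensionality => z0; rewrite !upd_same.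
    rewrite subrr normr0; apply: mulr_ge0 => //; exact: vnorm_ge0.
  apply: (incr_lip (time_ge0 c) (time_ge0 c.+1) (nice_bLip (upd y l z) c (IH c.+1)) (nice_bLip (upd y l z') c (IH c.+1))).
  move=> z0; rewrite (upd_comm y z z0 hlc) (upd_comm y z' z0 hlc); exact: hLip.
Qed.

Lemma iter_nice' f r c : nice' f -> nice' (iter f r c).
Proof. by move=> [C [L h]]; exists C, L; exact: iter_nice. Qed.

Lemma nice_const c : nice' (fun _ => c).
Proof.
exists `|c|, 0; split => // y l z z'; rewrite subrr normr0 mul0r //.
Qed.

Lemma nice_add f g : nice' f -> nice' g -> nice' (fun y => f y + g y).
Proof.
move=> [C1 [L1 [hL1 hC1 hl1]]] [C2 [L2 [hL2 hC2 hl2]]].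
exists (C1 + C2), (L1 + L2); split.
- exact: addr_ge0.
- move=> y; apply: le_trans (ler_normD _ _) _; exact: lerD.
- move=> y l z z'; rewrite mulrDl.
  have e : forall A B A' B' : R, A + A' - (B + B') = (A - B) + (A' - B') by move=> *; ring.
  rewrite e.
  apply: le_trans (ler_normD _ _) _; exact: lerD.
Qed.

Lemma nice_scale a f : nice' f -> nice' (fun y => a * f y).
Proof.
move=> [C1 [L1 [hL1 hC1 hl1]]].
exists (`|a| * C1), (`|a| * L1); split.
- exact: mulr_ge0.
- move=> y; rewrite normrM; apply: ler_wpM2l => //.
- move=> y l z z'; rewrite -mulrBr normrM -mulrA; apply: ler_wpM2l => //.
Qed.

Lemma iter_mono f g r c y : nice' f -> nice' g -> (forall y, f y <= g y) ->
  iter f r c y <= iter g r c y.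
Proof.
move=> hf hg hle; elim: r c y => [|r IH] c y; first exact: hle.
rewrite !iterS; apply: incr_mono; try exact: time_ge0.
- apply: nice'_bLip; exact: iter_nice'.
- apply: nice'_bLip; exact: iter_nice'.
- move=> z; exact: IH.
Qed.

Lemma iter_subadd f g r c y : nice' f -> nice' g ->
  iter (fun y => f y + g y) r c y <= iter f r c y + iter g r c y.
Proof.
move=> hf hg; elim: r c y => [|r IH] c y; first exact: lexx.
rewrite !iterS.
apply: le_trans; last (apply: incr_subadd; try exact: time_ge0).
- apply: incr_mono; try exact: time_ge0.
  + apply: nice'_bLip; apply: iter_nice'; exact: nice_add.
  + apply: bLip_add; apply: nice'_bLip; exact: iter_nice'.
  + move=> z; exact: IH.
- apply: nice'_bLip; exact: iter_nice'.
- apply: nice'_bLip; exact: iter_nice'.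
Qed.

Lemma iter_hom a f r c y : 0 <= a -> nice' f ->
  iter (fun y => a * f y) r c y = a * iter f r c y.
Proof.
move=> ha hf; elim: r c y => [|r IH] c y; first by [].
rewrite !iterS.
have -> : (fun z => iter (fun y0 => a * f y0) r c.+1 (upd y c z)) =
          (fun z => a * iter f r c.+1 (upd y c z)).
  by apply: functional_extensionality => z; rewrite IH.
apply: incr_hom; try exact: time_ge0; try done.
apply: nice'_bLip; exact: iter_nice'.
Qed.

Lemma iter_const k r c y : iter (fun _ => k) r c y = k.
Proof.
elim: r c y => [|r IH] c y; first by [].
rewrite iterS.
have -> : (fun z => iter (fun _ => k) r c.+1 (upd y c z)) = (fun _ => k).
  by apply: functional_extensionality => z; rewrite IH.
apply: incr_const; exact: time_ge0.
Qed.

End Iter.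
Section Blocks.
Variable R : realType.

Lemma ind_sum (B : nat) (HB : (0 < B)%N) (i m : nat) :
  \sum_(l < B) (((i * B + l)%N == m)%:R : R) = ((i == (m %/ B)%N)%:R : R).
Proof.
have key : forall l : 'I_B, ((i * B + l)%N == m) = (i == (m %/ B)%N) && (val l == (m %% B)%N).
  move=> l; apply/eqP/andP => [<-|[/eqP -> /eqP ->]]; last by rewrite -divn_eq.
  rewrite divnMDl // divn_small // addn0; split => //.
  by rewrite modnMDl modn_small.
case: (boolP (i == (m %/ B)%N)) => hi.
  rewrite (bigD1 (Ordinal (ltn_pmod m HB))) //= {1}(eqP hi) -divn_eq eqxx big1 ?addr0 // => l hl.
  rewrite key hi /=; case: eqP => // hl'; exfalso; move/eqP: hl; apply; exact: val_inj.
by rewrite big1 // => l _; rewrite key (negbTE hi).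
Qed.

Lemma ind_ord_sum (K q : nat) : \sum_(i < K) ((val i == q)%:R : R) <= 1.
Proof.
case: (ltnP q K) => hq.
  rewrite (bigD1 (Ordinal hq)) //= eqxx big1 ?addr0 // => i hi.
  case: eqP => // hiq; exfalso; move/eqP: hi; apply; exact: val_inj.
by rewrite big1 // => i _; case: eqP => // hiq; move: (ltn_ord i); rewrite hiq ltnNge hq.
Qed.

Variables (d K B : nat).
Hypothesis HB : (0 < B)%N.

Definition blk (y : nat -> V d -> R) : ('I_K * V d)%type -> R :=
  fun p => \sum_(l < B) y (val p.1 * B + l)%N p.2.

Lemma blk_diff y m (z z' : V d -> R) :
  (fun p => blk (upd y m z) p - blk (upd y m z') p) =
  (fun p => (val p.1 == (m %/ B)%N)%:R * (z p.2 - z' p.2)).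
Proof.
apply: functional_extensionality => p; rewrite /blk -sumrB -ind_sum // mulr_suml.
apply: eq_bigr => l _; rewrite /upd; case: eqP => _; first by rewrite mul1r.
by rewrite subrr mul0r.
Qed.

Lemma blk_vnorm y m (z z' : V d -> R) :
  vnorm (fun p => blk (upd y m z) p - blk (upd y m z') p) <= vnorm (fun j => z j - z' j).
Proof.
rewrite blk_diff /vnorm; apply: ler_wsqrtr.
rewrite -(pair_bigA _ (fun (i : 'I_K) (j : V d) => ((val i == (m %/ B)%N)%:R * (z j - z' j)) ^+ 2)) /=.
have -> : \sum_(i < K) \sum_j (((val i == (m %/ B)%N)%:R : R) * (z j - z' j)) ^+ 2 =
          \sum_(i < K) ((val i == (m %/ B)%N)%:R * \sum_j (z j - z' j) ^+ 2).
  apply: eq_bigr => i _; rewrite mulr_sumr; apply: eq_bigr => j _.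
  by rewrite exprMn; case: (_ == _); rewrite ?expr1n ?expr0n.
rewrite -mulr_suml; apply: ler_piMl; first exact: sumsq_ge0.
exact: ind_ord_sum.
Qed.

Lemma blk_nice (phi : (('I_K * V d)%type -> R) -> R) : bLip phi ->
  nice' (fun y => phi (blk y)).
Proof.
move=> /bLipP [C [L [_ hL hC hLip]]]; exists C, L; split => // y m z z'.
apply: le_trans (hLip _ _) _; apply: ler_wpM2l => //; exact: blk_vnorm.
Qed.

End Blocks.
Section Chain.
Variable R : realType.
Variables (d : nat) (Om1 Om2 : Type) (E1 : (Om1 -> R) -> R) (E2 : (Om2 -> R) -> R)
  (M : R -> Om1 -> 'I_d -> R) (N : R -> Om2 -> 'I_d -> R).
Variables (Om : Type) (H : (Om -> R) -> Prop) (E : (Om -> R) -> R) (P : R -> Om -> 'I_d -> R).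
Hypotheses (HSP : sublinear_space H E) (hP : indep_incr H E P).
Variables (delta : R) (s0 : V d) (j : 'I_d).
Hypothesis hdelta : 0 < delta.
Hypothesis Hstep : forall c (G : R -> R),
  incrE E1 E2 M N (c%:R * delta) (c.+1%:R * delta) (fun z => G (z s0)) =
  E (fun w => G (P (c.+1%:R * delta) w j - P (c%:R * delta) w j)).
Variables (g : R -> R) (Cg Lg : R).
Hypotheses (hgC : forall u, `|g u| <= Cg) (hgL : forall u u', `|g u - g u'| <= Lg * `|u - u'|).
Variables (c0 B : nat).

Notation iter := (iterE E1 E2 M N delta).

Definition fblk (y : nat -> V d -> R) := g (\sum_(l < B) y (c0 + l)%N s0).
Definition t1 := (c0 + B)%:R * delta.
Definition Phi (c : nat) (s : R) := E (fun w => g (s + (P t1 w j - P (c%:R * delta) w j))).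

Lemma Hconst c k : incrE E1 E2 M N (c%:R * delta) (c.+1%:R * delta) (fun _ => k) = k.
Proof.
have := Hstep c (fun _ => k) => /= ->; exact: (E_const HSP).
Qed.

Lemma chain_after r c y : (c0 + B <= c)%N -> iter fblk r c y = fblk y.
Proof.
elim: r c y => [|r IH] c y hc; first by [].
rewrite iterS.
have -> : (fun z => iter fblk r c.+1 (upd y c z)) = (fun _ => fblk y).
  apply: functional_extensionality => z; rewrite IH; last by apply: leq_trans hc _.
  rewrite /fblk; congr g; apply: eq_bigr => l _; rewrite /upd.
  case: eqP => // hl; exfalso; move: (ltn_ord l); rewrite ltnNge; move/negP; apply.
  by rewrite -(leq_add2l c0) hl.
exact: Hconst.
Qed.

Lemma indep_step (a b s : R) : 0 <= a -> a < b -> b <= t1 ->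
  E (fun w => E (fun w' => g (s + (P b w j - P a w j) + (P t1 w' j - P b w' j)))) =
  E (fun w => g (s + (P t1 w j - P a w j))).
Proof.
move=> ha hab hbt.
case: (eqVneq b t1) => [hb|hb].
  have -> : (fun w => E (fun w' => g (s + (P b w j - P a w j) + (P t1 w' j - P b w' j)))) =
            (fun w => g (s + (P t1 w j - P a w j))).
    apply: functional_extensionality => w; rewrite hb.
    have -> : (fun w' => g (s + (P t1 w j - P a w j) + (P t1 w' j - P t1 w' j))) =
              (fun _ => g (s + (P t1 w j - P a w j))).
      by apply: functional_extensionality => w'; rewrite subrr addr0.
    exact: (E_const HSP).
  by [].
have hbt' : b < t1 by rewrite lt_neqAle hb hbt.
case: hP => _ _ hind.
pose t : 'I_3 -> R := fun i => if val i == 0%N then a else if val i == 1%N then b else t1.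
have ht0 : 0 <= t ord0 by [].
have hinc : forall i k : 'I_3, (i < k)%N -> t i < t k.
  move=> [[|[|[|i]]] hi] [[|[|[|k]]] hk] //= _; rewrite /t /=; lra.
have := hind 1%N t ht0 hinc.
pose ph := fun v : (('I_2 * 'I_d) + 'I_d)%type -> R =>
  g (s + (v (inl (Ordinal (isT : (1 < 2)%N), j)) - v (inl (Ordinal (isT : (0 < 2)%N), j))) + v (inr j)).
move=> /(_ ph) hph.
have hphL : bLip ph.
  apply: (@bLip_intro _ _ _ Cg (3 * Lg)) => [v|v v']; first exact: hgC.
  apply: le_trans (hgL _ _) _.
  have hLg : 0 <= Lg.
    have := hgL 1 0; rewrite subr0 normr1 mulr1 => h; exact: le_trans (normr_ge0 _) h.
  rewrite [3 * Lg]mulrC -mulrA; apply: ler_wpM2l => //.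
  set D := vnorm _.
  have c1 := vnorm_coord (fun i => v i - v' i) (inl (Ordinal (isT : (1 < 2)%N), j)).
  have c2 := vnorm_coord (fun i => v i - v' i) (inl (Ordinal (isT : (0 < 2)%N), j)).
  have c3 := vnorm_coord (fun i => v i - v' i) (inr j).
  rewrite /= -/D in c1 c2 c3.
  set x1 := v _ in c1 *; set x2 := v _ in c2 *; set x3 := v _ in c3 *.
  set y1 := v' _ in c1 *; set y2 := v' _ in c2 *; set y3 := v' _ in c3 *.
  have -> : s + (x1 - x2) + x3 - (s + (y1 - y2) + y3) = (x1 - y1) - (x2 - y2) + (x3 - y3) by ring.
  apply: le_trans (ler_normD _ _) _; apply: le_trans (lerD (ler_normB _ _) (lexx _)) _.
  lra.
have := hph hphL; rewrite /ph /join /=.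
have e1 : val (inord 1 : 'I_3) = 1%N := inordK (isT : (1 < 3)%N).
have -> : t (inord 1) = b by rewrite /t e1.
rewrite /t /= => hh; rewrite -hh.
congr E; apply: functional_extensionality => w; congr g; ring.
Qed.

Lemma chain_mid m : forall c y r, c = (c0 + B - m)%N -> (m <= B)%N -> (m <= r)%N ->
  iter fblk r c y = Phi c (\sum_(l < B - m) y (c0 + l)%N s0).
Proof.
elim: m => [|m IH] c y r hc hm hr.
  rewrite subn0 in hc; subst c; rewrite subn0 chain_after //.
  rewrite /Phi /fblk /t1.
  have -> : (fun w => g (\sum_(l < B) y (c0 + l)%N s0 +
              (P ((c0 + B)%:R * delta) w j - P ((c0 + B)%:R * delta) w j))) =
            (fun _ => g (\sum_(l < B) y (c0 + l)%N s0)).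
    by apply: functional_extensionality => w; rewrite subrr addr0.
  by rewrite (E_const HSP).
case: r => [|r] in hr *; first by [].
rewrite iterS.
set s := \sum_(l < B - m.+1) y (c0 + l)%N s0.
have hc1 : c.+1 = (c0 + B - m)%N by lia.
have -> : (fun z => iter fblk r c.+1 (upd y c z)) = (fun z => Phi c.+1 (s + z s0)).
  apply: functional_extensionality => z.
  rewrite (IH c.+1 (upd y c z) r hc1 (ltnW hm) hr); congr Phi.
  have hBm : (B - m = (B - m.+1).+1)%N by lia.
  rewrite hBm big_ord_recr /=; congr (_ + _).
    apply: eq_bigr => l _; rewrite /upd /=.
    case: eqP => // hl; exfalso; move: (ltn_ord l); lia.
  by rewrite /upd /= ifT //; apply/eqP; lia.
rewrite (Hstep c (fun u => Phi c.+1 (s + u))) /Phi.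
apply: indep_step.
- apply: mulr_ge0 => //; exact: ltW.
- by rewrite ltr_pM2r // ltr_nat.
- by rewrite /t1 ler_pM2r // ler_nat; lia.
Qed.

Lemma chain_before m : forall c y r, (c + m = c0)%N -> (B + m <= r)%N ->
  iter fblk r c y = Phi c0 0.
Proof.
elim: m => [|m IH] c y r hc hr.
  rewrite addn0 in hc; subst c.
  rewrite (@chain_mid B c0 y r) ?subnn ?big_ord0 //; lia.
case: r => [|r] in hr *; first by exfalso; lia.
rewrite iterS.
have -> : (fun z => iter fblk r c.+1 (upd y c z)) = (fun _ => Phi c0 0).
  apply: functional_extensionality => z; apply: IH; lia.
exact: Hconst.
Qed.

Lemma chain_total T y : (c0 + B <= T)%N -> iter fblk T 0 y = Phi c0 0.
Proof. move=> h; apply: (@chain_before c0) => //; lia. Qed.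

End Chain.
Section Main.
Variable R : realType.
Variables (d n : nat) (Om1 Om2 : Type) (H1 : (Om1 -> R) -> Prop) (E1 : (Om1 -> R) -> R)
  (H2 : (Om2 -> R) -> Prop) (E2 : (Om2 -> R) -> R)
  (M : R -> Om1 -> 'I_d -> R) (N : R -> Om2 -> 'I_d -> R).
Hypotheses (HS1 : sublinear_space H1 E1) (HS2 : sublinear_space H2 E2)
  (hM1 : indep_incr H1 E1 M) (hN1 : indep_incr H2 E2 N).

Lemma hMin t : 0 <= t -> in_H H1 (M t).
Proof. by case: hM1 => _ h _; exact: h. Qed.
Lemma hNin t : 0 <= t -> in_H H2 (N t).
Proof. by case: hN1 => _ h _; exact: h. Qed.

Definition FK k (phi : (('I_(2 ^ n) * V d)%type -> R) -> R) := Fnk E1 E2 M N n k phi.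

Lemma FK_iter k phi : FK k phi =
  iterE E1 E2 M N (dyad R k) (fun y => phi (@blk R d (2 ^ n) (2 ^ (k - n)) y)) (2 ^ k) 0 (fun _ _ => 0).
Proof. by []. Qed.

Lemma dyad_gt0 k : 0 < dyad R k.
Proof. by rewrite /dyad invr_gt0 exprn_gt0. Qed.

Lemma B_gt0 k : (0 < 2 ^ (k - n))%N.
Proof. by rewrite expn_gt0. Qed.

Lemma FK_nice k phi : bLip phi -> nice' (fun y => phi (@blk R d (2 ^ n) (2 ^ (k - n)) y)).
Proof. move=> hp; exact: (@blk_nice R d (2 ^ n) (2 ^ (k - n)) (B_gt0 k) phi hp). Qed.

Lemma FK_mono k phi psi : bLip phi -> bLip psi -> (forall x, phi x <= psi x) ->
  FK k phi <= FK k psi.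
Proof.
move=> hp hq hle; rewrite !FK_iter.
apply: (iter_mono HS1 HS2 hMin hNin (ltW (dyad_gt0 k))); try exact: FK_nice.
move=> y; exact: hle.
Qed.

Lemma FK_subadd k phi psi : bLip phi -> bLip psi ->
  FK k (fun x => phi x + psi x) <= FK k phi + FK k psi.
Proof.
move=> hp hq; rewrite !FK_iter.
exact: (iter_subadd HS1 HS2 hMin hNin (ltW (dyad_gt0 k)) _ _ _ (FK_nice k hp) (FK_nice k hq)).
Qed.

Lemma FK_hom k a phi : 0 <= a -> bLip phi -> FK k (fun x => a * phi x) = a * FK k phi.
Proof.
move=> ha hp; rewrite !FK_iter.
exact: (iter_hom HS1 HS2 hMin hNin (ltW (dyad_gt0 k)) _ _ _ ha (FK_nice k hp)).
Qed.

Lemma FK_const k c : FK k (fun _ => c) = c.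
Proof. by rewrite FK_iter (@iter_const R d Om1 Om2 H1 E1 H2 E2 M N HS1 HS2). Qed.

Lemma FK_bound phi : bLip phi -> exists C, forall k, `|FK k phi| <= C.
Proof.
move=> /bLipP [C [L [_ hL hC hLip]]]; exists C => k; rewrite FK_iter.
have hn : nice C L (fun y => phi (@blk R d (2 ^ n) (2 ^ (k - n)) y)).
  split => // y m z z'; apply: le_trans (hLip _ _) _; apply: ler_wpM2l => //.
  exact: (@blk_vnorm R d (2 ^ n) (2 ^ (k - n)) (B_gt0 k)).
by case: (iter_nice HS1 HS2 hMin hNin (ltW (dyad_gt0 k)) hn (2 ^ k) 0).
Qed.

Definition Fset phi : classical_sets.set R := fun x => exists k, (n <= k)%N /\ x = FK k phi.
Definition F phi := sup (Fset phi).

Lemma F_ub phi k : @bLip R _ phi -> (n <= k)%N -> FK k phi <= F phi.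
Proof.
move=> hp hk; have [C hC] := FK_bound hp.
have hub : classical_sets.has_ubound (Fset phi).
  exists C => x [k' [_ ->]]; exact: le_trans (ler_norm _) (hC k').
by apply: (ub_le_sup hub); exists k.
Qed.
Arguments F_ub {phi k}.

Lemma F_le phi z : (forall k, (n <= k)%N -> FK k phi <= z) -> F phi <= z.
Proof.
move=> h; apply: ge_sup; first by exists (FK n phi), n.
by move=> x [k [hk ->]]; exact: h.
Qed.

Lemma F_sublinear : sublinear_expectation (@bLip R _) F.
Proof.
split.
- move=> p q hp hq hle; apply: F_le => k hk.
  exact: le_trans (FK_mono k hp hq hle) (F_ub hq hk).
- move=> c; apply/eqP; rewrite eq_le; apply/andP; split.
    by apply: F_le => k _; rewrite FK_const.
  rewrite -{1}(FK_const n c).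
  apply: (@F_ub (fun _ => c) n); [exact: bLip_const | exact: leqnn].
- move=> p q hp hq; apply: F_le => k hk.
  apply: le_trans (FK_subadd k hp hq) _; exact: lerD (F_ub hp hk) (F_ub hq hk).
- move=> a p hp ha; case: (eqVneq a 0) => [->|ha0].
    rewrite mul0r; apply/eqP; rewrite eq_le; apply/andP; split.
      by apply: F_le => k _; rewrite FK_hom // mul0r.
    by have := F_ub (bLip_scale 0 hp) (leqnn n); rewrite FK_hom // mul0r.
  have ha' : 0 < a by rewrite lt_neqAle eq_sym ha0.
  apply/eqP; rewrite eq_le; apply/andP; split.
    apply: F_le => k hk; rewrite FK_hom //; apply: ler_wpM2l => //; exact: F_ub.
  have h : F p <= F (fun w => a * p w) / a.
    apply: F_le => k hk.
    have -> : FK k p = FK k (fun w => a * p w) / a by rewrite FK_hom // [a * _]mulrC mulfK.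
    rewrite ler_pM2r ?invr_gt0 //; exact: F_ub (bLip_scale a hp) hk.
  have := ler_wpM2l ha h; rewrite [a * (_ / a)]mulrC divfK //.
Qed.

Lemma F_dom k p q : (n <= k)%N -> bLip p -> bLip q ->
  FK k p - FK k q <= F (fun x => p x - q x).
Proof.
move=> hk hp hq.
have h := FK_subadd k hq (bLip_sub hp hq).
have e : (fun x => q x + (p x - q x)) = p by apply: functional_extensionality => x; ring.
rewrite e in h.
have := F_ub (bLip_sub hp hq) hk; lra.
Qed.

Lemma FK_sum k (Q : finType) (s : seq Q) (G : Q -> (('I_(2 ^ n) * V d)%type -> R) -> R) :
  (forall q, bLip (G q)) ->
  FK k (fun x => \sum_(q <- s) G q x) <= \sum_(q <- s) FK k (G q).
Proof.
move=> hG; elim: s => [|q s IH].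
  have -> : (fun x => \sum_(q <- [::]) G q x) = (fun _ => 0).
    by apply: functional_extensionality => x; rewrite big_nil.
  by rewrite FK_const big_nil.
have -> : (fun x => \sum_(q0 <- q :: s) G q0 x) = (fun x => G q x + \sum_(q0 <- s) G q0 x).
  by apply: functional_extensionality => x; rewrite big_cons.
rewrite big_cons; apply: le_trans (FK_subadd k (hG q) (bLip_sum s hG)) _.
exact: lerD.
Qed.

Lemma time_eq k c : (n <= k)%N -> ((c * 2 ^ (k - n))%N)%:R * dyad R k = c%:R * dyad R n.
Proof.
move=> hk; rewrite /dyad natrM natrX.
have -> : (2:R) ^+ k = 2 ^+ n * 2 ^+ (k - n) by rewrite -exprD subnKC.
have h1 : (2 : R) ^+ n != 0 by apply: expf_neq0; rewrite pnatr_eq0.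
have h2 : (2 : R) ^+ (k - n) != 0 by apply: expf_neq0; rewrite pnatr_eq0.
by field; rewrite h1 h2.
Qed.

Lemma Hstep_M (delta : R) (j : 'I_d) c (G : R -> R) :
  incrE E1 E2 M N (c%:R * delta) (c.+1%:R * delta) (fun z => G (z (inl j))) =
  E1 (fun w => G (M (c.+1%:R * delta) w j - M (c%:R * delta) w j)).
Proof.
rewrite /incrE /=; congr E1; apply: functional_extensionality => w.
exact: (E_const HS2).
Qed.

Lemma Hstep_N (delta : R) (j : 'I_d) c (G : R -> R) :
  incrE E1 E2 M N (c%:R * delta) (c.+1%:R * delta) (fun z => G (z (inr j))) =
  E2 (fun w => G (N (c.+1%:R * delta) w j - N (c%:R * delta) w j)).
Proof. by rewrite /incrE /= (E_const HS1). Qed.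
Lemma FK_coordM k (hk : (n <= k)%N) (i : 'I_(2 ^ n)) (j : 'I_d) (g : R -> R) Cg Lg :
  (forall u, `|g u| <= Cg) -> (forall u u', `|g u - g u'| <= Lg * `|u - u'|) ->
  FK k (fun x => g (x (i, inl j))) =
  E1 (fun w => g (0 + (M ((val i).+1%:R * dyad R n) w j - M ((val i)%:R * dyad R n) w j))).
Proof.
move=> hgC hgL; rewrite FK_iter.
have hT : (val i * 2 ^ (k - n) + 2 ^ (k - n) <= 2 ^ k)%N.
  have -> : (2 ^ k = 2 ^ n * 2 ^ (k - n))%N by rewrite -expnD subnKC.
  rewrite addnC -mulSn; apply: leq_mul => //; exact: ltn_ord.
have e := chain_total HS1 hM1 (dyad_gt0 k) (Hstep_M (dyad R k) j) hgC hgL (fun _ _ => 0) hT.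
etransitivity; first exact: e.
have t1e : ((val i * 2 ^ (k - n) + 2 ^ (k - n))%N%:R * dyad R k = (val i).+1%:R * dyad R n).
  by rewrite addnC -mulSn time_eq.
have t0e : ((val i * 2 ^ (k - n))%N%:R * dyad R k = (val i)%:R * dyad R n) by rewrite time_eq.
by rewrite /Phi /t1 t1e t0e.
Qed.

Lemma FK_coordN k (hk : (n <= k)%N) (i : 'I_(2 ^ n)) (j : 'I_d) (g : R -> R) Cg Lg :
  (forall u, `|g u| <= Cg) -> (forall u u', `|g u - g u'| <= Lg * `|u - u'|) ->
  FK k (fun x => g (x (i, inr j))) =
  E2 (fun w => g (0 + (N ((val i).+1%:R * dyad R n) w j - N ((val i)%:R * dyad R n) w j))).
Proof.
move=> hgC hgL; rewrite FK_iter.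
have hT : (val i * 2 ^ (k - n) + 2 ^ (k - n) <= 2 ^ k)%N.
  have -> : (2 ^ k = 2 ^ n * 2 ^ (k - n))%N by rewrite -expnD subnKC.
  rewrite addnC -mulSn; apply: leq_mul => //; exact: ltn_ord.
have e := chain_total HS2 hN1 (dyad_gt0 k) (Hstep_N (dyad R k) j) hgC hgL (fun _ _ => 0) hT.
etransitivity; first exact: e.
have t1e : ((val i * 2 ^ (k - n) + 2 ^ (k - n))%N%:R * dyad R k = (val i).+1%:R * dyad R n).
  by rewrite addnC -mulSn time_eq.
have t0e : ((val i * 2 ^ (k - n))%N%:R * dyad R k = (val i)%:R * dyad R n) by rewrite time_eq.
by rewrite /Phi /t1 t1e t0e.
Qed.
Lemma Et_bound (Om : Type) (H : (Om -> R) -> Prop) (E Et : (Om -> R) -> R)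
  (HS : sublinear_space H E) (HEt : sublinear_expectation H Et)
  (hcmp : forall X Y, H X -> H Y -> E X - E Y <= Et (fun w => X w - Y w))
  (X V : Om -> R) (a : R) : 0 < a -> H X -> H V -> (forall w, X w <= a^-1 * V w) ->
  E X <= a^-1 * Et V.
Proof.
move=> ha hX hV hle.
have HSt : sublinear_space H Et by case: HS => h1 h2 _; split.
have := hcmp X (fun _ => 0) hX (H_const HS 0); rewrite (E_const HS) subr0 => h.
apply: le_trans h _.
rewrite -(@E_hom R Om H Et HSt a^-1 V hV); last by rewrite invr_ge0 ltW.
apply: (E_mono HSt (H_sub HS hX (H_const HS 0)) (H_scale HS a^-1 hV)) => w.
by rewrite subr0.
Qed.

Lemma gcl_coord_bLip (a : R) (ha : 0 < a) (j : 'I_d) :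
  bLip (fun u : 'I_d -> R => gcl a (0 + u j)).
Proof.
apply: (@bLip_intro _ _ _ 1 a^-1) => [u|u u']; first exact: gcl_norm.
apply: le_trans (gcl_lip ha _ _) _; rewrite !add0r; apply: ler_wpM2l.
  by rewrite invr_ge0 ltW.
exact: (vnorm_coord (fun l => u l - u' l) j).
Qed.

Lemma gcl_vn (a : R) (ha : 0 < a) (j : 'I_d) (u : 'I_d -> R) :
  gcl a (0 + u j) <= a^-1 * vnorm u.
Proof.
apply: le_trans (gcl_le a _) _; rewrite add0r mulrC; apply: ler_wpM2l.
  by rewrite invr_ge0 ltW.
exact: vnorm_coord.
Qed.

Lemma F_tight (Et1 : (Om1 -> R) -> R) (Et2 : (Om2 -> R) -> R)
  (hEt1 : sublinear_expectation H1 Et1) (hEt2 : sublinear_expectation H2 Et2)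
  (c1 : forall X Y, H1 X -> H1 Y -> E1 X - E1 Y <= Et1 (fun w => X w - Y w))
  (c2 : forall X Y, H2 X -> H2 Y -> E2 X - E2 Y <= Et2 (fun w => X w - Y w))
  (hv : forall s t, 0 <= s -> 0 <= t ->
           H1 (fun w => vnorm (fun i => M s w i - M t w i)) /\
           H2 (fun w => vnorm (fun i => N s w i - N t w i))) :
  tight F.
Proof.
move=> eps heps.
pose vM (i : nat) := fun w => vnorm (fun l => M (i.+1%:R * dyad R n) w l - M (i%:R * dyad R n) w l).
pose vN (i : nat) := fun w => vnorm (fun l => N (i.+1%:R * dyad R n) w l - N (i%:R * dyad R n) w l).
pose bnd (q : ('I_(2 ^ n) * V d)%type) :=
  match q.2 with inl _ => Et1 (vM q.1) | inr _ => Et2 (vN q.1) end.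
pose T := \sum_q bnd q.
have hT1 : 0 < `|T| + 1 by have := normr_ge0 T; lra.
pose a := (`|T| + 1) / eps.
have ha : 0 < a by apply: divr_gt0.
pose K : R := #|{: ('I_(2 ^ n) * V d)%type}|%:R.
have hK : 0 <= K by exact: ler0n.
pose Nr := (K + 1) * a.
have hti0 : forall i : nat, 0 <= i%:R * dyad R n by move=> i; apply: mulr_ge0 => //; exact: ltW (dyad_gt0 n).
have hcb : forall q, bLip (fun x : ('I_(2 ^ n) * V d)%type -> R => gcl a (x q)).
  move=> q; apply: (@bLip_intro _ _ _ 1 a^-1) => [x|x y]; first exact: gcl_norm.
  apply: le_trans (gcl_lip ha _ _) _; apply: ler_wpM2l.
    by rewrite invr_ge0 ltW.
  exact: (vnorm_coord (fun l => x l - y l) q).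
exists Nr, (fun x => \sum_q gcl a (x q)); split.
- by apply: mulr_gt0 => //; lra.
- exact: bLip_sum.
- move=> x; case: ifP => hx; last by apply: sumr_ge0 => q _; exact: gcl_ge0.
  case: (boolP [exists q, 1 < `|x q| / a]).
    move/existsP => [q hq]; rewrite (bigD1 q) //=.
    have -> : gcl a (x q) = 1 by rewrite /gcl ifN // -ltNge.
    rewrite lerDl; apply: sumr_ge0 => l _; exact: gcl_ge0.
  rewrite negb_exists => /forallP hall; exfalso.
  have hq : forall q, x q ^+ 2 <= a ^+ 2.
    move=> q; have := hall q; rewrite -leNgt ler_pdivrMr // mul1r => hxq.
    rewrite -real_normK ?num_real // !expr2; apply: ler_pM => //.
  have hs : \sum_q x q ^+ 2 <= K * a ^+ 2.
    apply: le_trans (ler_sum _ (fun q _ => hq q)) _.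
    by rewrite sumr_const mulr_natl.
  rewrite -vnorm_sq in hs.
  have hN0 : 0 <= Nr by apply: mulr_ge0; lra.
  have h2 : Nr * Nr <= vnorm x ^+ 2 by rewrite expr2; apply: ler_pM.
  rewrite /Nr in h2; nra.
- have hbound : F (fun x => \sum_q gcl a (x q)) <= a^-1 * T.
    apply: F_le => k hk.
    apply: le_trans (FK_sum k _ hcb) _.
    rewrite /T mulr_sumr; apply: ler_sum => -[i [j|j]] _.
      rewrite (FK_coordM hk i j (@gcl_norm _ _ ha) (gcl_lip ha)).
      apply: (Et_bound HS1 hEt1 c1) => //.
      + apply: (H_comp HS1 (X := fun l w => M ((val i).+1%:R * dyad R n) w l - M ((val i)%:R * dyad R n) w l) (phi := fun u => gcl a (0 + u j))).
          move=> l; apply: (H_sub HS1); [exact: (hMin (hti0 _) l) | exact: (hMin (hti0 _) l)].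
        exact: gcl_coord_bLip.
      + by case: (hv _ _ (hti0 (val i).+1) (hti0 (val i))).
      + move=> w; exact: (gcl_vn ha j (fun l => M ((val i).+1%:R * dyad R n) w l - M ((val i)%:R * dyad R n) w l)).
    rewrite (FK_coordN hk i j (@gcl_norm _ _ ha) (gcl_lip ha)).
    apply: (Et_bound HS2 hEt2 c2) => //.
    + apply: (H_comp HS2 (X := fun l w => N ((val i).+1%:R * dyad R n) w l - N ((val i)%:R * dyad R n) w l) (phi := fun u => gcl a (0 + u j))).
        move=> l; apply: (H_sub HS2); [exact: (hNin (hti0 _) l) | exact: (hNin (hti0 _) l)].
      exact: gcl_coord_bLip.
    + by case: (hv _ _ (hti0 (val i).+1) (hti0 (val i))).
    + move=> w; exact: (gcl_vn ha j (fun l => N ((val i).+1%:R * dyad R n) w l - N ((val i)%:R * dyad R n) w l)).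
  apply: le_lt_trans hbound _.
  have hle : a^-1 * T <= a^-1 * `|T| by apply: ler_wpM2l; [rewrite invr_ge0 ltW | exact: ler_norm].
  apply: le_lt_trans hle _.
  have -> : a^-1 * `|T| = eps - eps / (`|T| + 1).
    rewrite /a invf_div; field; rewrite gt_eqF //.
  have : 0 < eps / (`|T| + 1) by apply: divr_gt0.
  lra.
Qed.

End Main.

Theorem lemma3p3 (R : realType) (d n : nat) (Om1 Om2 : Type)
    (H1 : (Om1 -> R) -> Prop) (E1 : (Om1 -> R) -> R)
    (H2 : (Om2 -> R) -> Prop) (E2 : (Om2 -> R) -> R)
    (M : R -> Om1 -> 'I_d -> R) (N : R -> Om2 -> 'I_d -> R) :
  (1 <= n)%N ->
  sublinear_space H1 E1 -> sublinear_space H2 E2 ->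
  indep_incr H1 E1 M -> indep_incr H2 E2 N ->
  condA H1 H2 E1 E2 M N ->
  exists F : ((('I_(2 ^ n) * V d)%type -> R) -> R) -> R,
    [/\ sublinear_expectation (@bLip R _) F,
        tight F &
        forall k : nat, (n <= k)%N ->
        forall phi psi : (('I_(2 ^ n) * V d)%type -> R) -> R,
          bLip phi -> bLip psi ->
          Fnk E1 E2 M N n k phi - Fnk E1 E2 M N n k psi
            <= F (fun x => phi x - psi x)].
Proof.
move=> hn HS1 HS2 hM1 hN1 [Et1 [Et2 [[hEt1 hEt2] c1 c2 [hv _]]]].
exists (@F R d n Om1 Om2 E1 E2 M N); split.
- exact: (@F_sublinear R d n Om1 Om2 H1 E1 H2 E2 M N HS1 HS2 hM1 hN1).
- exact: (@F_tight R d n Om1 Om2 H1 E1 H2 E2 M N HS1 HS2 hM1 hN1 Et1 Et2 hEt1 hEt2 c1 c2 hv).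
- move=> k hk phi psi hp hq.
  exact: (@F_dom R d n Om1 Om2 H1 E1 H2 E2 M N HS1 HS2 hM1 hN1 k phi psi hk hp hq).
Qed.
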